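(* Let $G=(V,E)$ be a connected graph with $n=|V|$ nodes and let $\mathbf{A}\in\mathbb{R}^{n\times n}$ be a graph shift operator for $G$. Let $\mathbf{W}\in\mathbb{R}^{c\times c}$, $\mathbf{B}\in\mathbb{R}^{c'\times c}$, inputs $\mathbf{U}_t\in\mathbb{R}^{n\times c'}$, and consider the recurrence $\mathbf{X}_{t+1}=\mathbf{A}\mathbf{X}_t\mathbf{W}+\mathbf{U}_{t+1}\mathbf{B}$, $\mathbf{X}_t\in\mathbb{R}^{n\times c}$. Define the global sensitivity $\mathcal{S}(t-s)=\max_{i,j}\left\|\frac{\partial \mathbf{X}_t^{(i)}}{\partial \mathbf{X}_s^{(j)}}\right\|$. Then for all $s\le t$, $$\frac{\rho(\mathbf{A})^{t-s}}{|V|}\,\|\mathbf{W}^{t-s}\|\le\mathcal{S}(t-s),$$ where $\rho(\mathbf{A})$ is the spectral radius of $\mathbf{A}$. In particular, if $G$ is undirected and $\mathbf{A}=\mathbf{D}^{-1/2}(\tilde{\mathbf{A}}+\mathbf{I})\mathbf{D}^{-1/2}$, with $\tilde{\mathbf{A}}$ the adjacency matrix and $\mathbf{D}$ the diagonal degree matrix of $\tilde{\mathbf{A}}+\mathbf{I}$, then $\frac{1}{|V|}\|\mathbf{W}^{t-s}\|\le\mathcal{S}(t-s)$.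
   Context: $\mathbf{X}_t^{(i)}\in\mathbb{R}^{1\times c}$ denotes the $i$-th row of $\mathbf{X}_t$, regarded as a function of $\mathbf{X}_s$ through the recurrence with inputs held fixed; the Jacobian of row vectors is the $c\times c$ matrix with $(p,q)$ entry $\partial y_p/\partial x_q$. $\|\cdot\|$ denotes the spectral norm and the maximum is over all pairs of nodes $i,j$. *)

(* Defs.v *)
From HB Require Import structures.
From mathcomp Require Import all_boot all_order all_algebra.
From mathcomp Require Import all_classical all_reals all_analysis.
From mathcomp Require Import complex.
Set Implicit Arguments. Unset Strict Implicit. Unset Printing Implicit Defensive.
Import Order.TTheory GRing.Theory Num.Theory.
Local Open Scope ring_scope.
Local Open Scope classical_set_scope.

Section Defs.
Variable R : realType.

Definition graph_connected (n : nat) (e : rel 'I_n) : Prop :=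
  forall i j : 'I_n, connect (fun x y => e x y || e y x) i j.

Definition undirected (n : nat) (e : rel 'I_n) : Prop :=
  (forall i j, e i j = e j i) /\ (forall i, ~~ e i i).

Definition is_GSO (n : nat) (e : rel 'I_n) (A : 'M[R]_n) : Prop :=
  forall i j : 'I_n, A i j != 0 -> (i = j) \/ e i j.

Definition adjmx (n : nat) (e : rel 'I_n) : 'M[R]_n :=
  \matrix_(i, j) (e i j)%:R.

Definition sym_norm_adj (n : nat) (e : rel 'I_n) : 'M[R]_n :=
  let AI := adjmx e + 1%:M in
  let Dmhalf := diag_mx (\row_i (Num.sqrt (\sum_j AI i j))^-1) in
  Dmhalf *m AI *m Dmhalf.

Definition enorm (c : nat) (x : 'cV[R]_c) : R := Num.sqrt (\sum_i x i 0 ^+ 2).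

Definition specnorm (p q : nat) (M : 'M[R]_(p, q)) : R :=
  sup [set enorm (M *m x) | x in [set x : 'cV[R]_q | enorm x = 1]].

Definition cmod (z : complex.complex (R : rcfType)) : R :=
  Num.sqrt (complex.Re z ^+ 2 + complex.Im z ^+ 2).

Definition specrad (n : nat) (A : 'M[R]_n) : R :=
  sup [set cmod l | l in [set l : complex.complex (R : rcfType) |
         eigenvalue (map_mx (fun x : R => complex.real_complex (R : rcfType) x) A) l]].

(* matrix power for possibly-empty square matrices *)
Definition mxpow (c : nat) (W : 'M[R]_c) (k : nat) : 'M[R]_c :=
  iter k (fun M => M *m W) 1%:M.

(* evol A W B U s Xs k = X_{s+k}, given X_s = Xs and inputs U held fixed *)
Fixpoint evol (n c c' : nat) (A : 'M[R]_n) (W : 'M[R]_c) (B : 'M[R]_(c', c))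
  (U : nat -> 'M[R]_(n, c')) (s : nat) (Xs : 'M[R]_(n, c)) (k : nat) : 'M[R]_(n, c) :=
  match k with
  | 0 => Xs
  | k'.+1 => A *m evol A W B U s Xs k' *m W + U (s + k').+1 *m B
  end.

Definition row_jacobian (n c c' : nat) (A : 'M[R]_n) (W : 'M[R]_c) (B : 'M[R]_(c', c))
  (U : nat -> 'M[R]_(n, c')) (s t : nat) (Xs : 'M[R]_(n, c)) (i j : 'I_n) : 'M[R]_c :=
  \matrix_(p, q)
     (derive1 (fun h : R => evol A W B U s (Xs + h *: delta_mx j q) (t - s) i p) 0).

Definition sensitivity (n c c' : nat) (A : 'M[R]_n) (W : 'M[R]_c) (B : 'M[R]_(c', c))
  (U : nat -> 'M[R]_(n, c')) (s t : nat) (Xs : 'M[R]_(n, c)) : R :=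
  \big[Num.max/0]_(ij : 'I_n * 'I_n)
     specnorm (row_jacobian A W B U s t Xs ij.1 ij.2).

End Defs.

(* Main.v *)
Require Import Defs.
From HB Require Import structures.
From mathcomp Require Import all_boot all_order all_algebra.
From mathcomp Require Import all_classical all_reals all_analysis.
From mathcomp Require Import ring lra.
From mathcomp Require Import complex.
Import Order.TTheory GRing.Theory Num.Theory.
Local Open Scope ring_scope.
Local Open Scope classical_set_scope.
Set Implicit Arguments. Unset Strict Implicit. Unset Printing Implicit Defensive.
Section S.
Variable R : realType.


Lemma derive_affine (a b : R) : derive1 (fun h : R => a + h * b) 0 = b.
Proof.
have -> : (fun h : R => a + h * b) = (cst a) + (b \*: id).
  by apply/funext => h /=; rewrite mulrC.
have H : is_derive (0:R) 1 ((cst a) + (b \*: id)) (0 + b *: (1:R)).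
  exact: is_deriveD.
by rewrite derive1E derive_val add0r /GRing.scale /= mulr1.
Qed.

Lemma mxpowS (c : nat) (W : 'M[R]_c) k : mxpow W k.+1 = mxpow W k *m W.
Proof. by []. Qed.

Lemma mxpow0 (c : nat) (W : 'M[R]_c) : mxpow W 0 = 1%:M.
Proof. by []. Qed.

Lemma mxpowSl (c : nat) (W : 'M[R]_c) k : mxpow W k.+1 = W *m mxpow W k.
Proof.
elim: k => [|k IH].
  by rewrite mxpowS mxpow0 mul1mx mulmx1.
by rewrite mxpowS {1}IH -mulmxA -mxpowS.
Qed.

Lemma evol_lin (n c c' : nat) (A : 'M[R]_n) (W : 'M[R]_c) (B : 'M[R]_(c', c))
  (U : nat -> 'M[R]_(n, c')) s Xs Y k :
  evol A W B U s (Xs + Y) k = evol A W B U s Xs k + mxpow A k *m Y *m mxpow W k.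
Proof.
elim: k => [|k IH].
  by rewrite mxpow0 mul1mx mulmx1.
rewrite [evol _ _ _ _ _ _ k.+1]/= [evol _ _ _ _ _ _ k.+1]/=.
rewrite IH mulmxDr mulmxDl -!addrA; congr (_ + _).
rewrite addrC; congr (_ + _).
by rewrite mxpowSl mxpowS !mulmxA.
Qed.

Lemma delta_entry (n c : nat) (P : 'M[R]_n) (Q : 'M[R]_c) i j q p :
  (P *m delta_mx j q *m Q) i p = P i j * Q q p.
Proof.
have E : forall l, (P *m delta_mx j q) i l = P i j * (l == q)%:R.
  move=> l; rewrite mxE (bigD1 j) //= big1 ?addr0.
    by rewrite mxE eqxx.
  by move=> m /negbTE mj; rewrite mxE mj mulr0.
rewrite mxE (bigD1 q) //= big1 ?addr0.
  by rewrite E eqxx mulr1.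
by move=> l /negbTE ql; rewrite E ql mulr0 mul0r.
Qed.

Lemma row_jacobianE (n c c' : nat) (A : 'M[R]_n) (W : 'M[R]_c) (B : 'M[R]_(c', c))
  (U : nat -> 'M[R]_(n, c')) s t Xs i j :
  row_jacobian A W B U s t Xs i j = mxpow A (t - s) i j *: (mxpow W (t - s))^T.
Proof.
apply/matrixP => p q; rewrite !mxE.
rewrite (_ : (fun h => _) = (fun h => evol A W B U s Xs (t - s) i p +
   h * (mxpow A (t - s) i j * mxpow W (t - s) q p))); first by rewrite derive_affine.
apply/funext => h.
by rewrite evol_lin -scalemxAr -scalemxAl mxE [in X in _ + X]mxE delta_entry.
Qed.


Lemma enorm_ge0 (c : nat) (x : 'cV[R]_c) : 0 <= enorm x.
Proof. exact: sqrtr_ge0. Qed.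

Lemma enorm_sq (c : nat) (x : 'cV[R]_c) : enorm x ^+ 2 = \sum_i x i 0 ^+ 2.
Proof. by rewrite sqr_sqrtr // sumr_ge0 // => i _; rewrite sqr_ge0. Qed.

Lemma enormZ (c : nat) (a : R) (x : 'cV[R]_c) : enorm (a *: x) = `|a| * enorm x.
Proof.
rewrite /enorm (eq_bigr (fun i => a ^+ 2 * x i 0 ^+ 2)); last first.
  by move=> i _; rewrite mxE exprMn.
by rewrite -mulr_sumr sqrtrM ?sqr_ge0 // sqrtr_sqr.
Qed.

Lemma enormN (c : nat) (x : 'cV[R]_c) : enorm (- x) = enorm x.
Proof. by rewrite -scaleN1r enormZ normrN normr1 mul1r. Qed.

Lemma entry_le (c : nat) (x : 'cV[R]_c) i : `|x i 0| <= enorm x.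
Proof.
rewrite -sqrtr_sqr ler_wsqrtr // (bigD1 i) //= lerDl sumr_ge0 // => j _.
exact: sqr_ge0.
Qed.

Lemma enorm_eq0 (c : nat) (x : 'cV[R]_c) : enorm x = 0 -> x = 0.
Proof.
move=> /eqP; rewrite sqrtr_eq0 => H.
have S0 : \sum_i x i 0 ^+ 2 = 0.
  by apply/eqP; rewrite eq_le H sumr_ge0 // => i _; rewrite sqr_ge0.
apply/matrixP => i j; rewrite (ord1 j) mxE.
apply/eqP; rewrite -sqrf_eq0; apply/eqP.
by apply: (psumr_eq0P _ S0) => // k _; rewrite sqr_ge0.
Qed.

Lemma enorm0 (c : nat) : enorm (0 : 'cV[R]_c) = 0.
Proof. by rewrite /enorm big1 ?sqrtr0 // => i _; rewrite mxE expr0n. Qed.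

Definition dot (c : nat) (x z : 'cV[R]_c) := \sum_i x i 0 * z i 0.

Lemma dotE (c : nat) (x z : 'cV[R]_c) : dot x z = (x^T *m z) 0 0.
Proof. by rewrite mxE; apply: eq_bigr => i _; rewrite mxE. Qed.

Lemma dotZr (c : nat) a (x z : 'cV[R]_c) : dot x (a *: z) = a * dot x z.
Proof. by rewrite /dot mulr_sumr; apply: eq_bigr => i _; rewrite mxE mulrCA. Qed.

Lemma dotNr (c : nat) (x z : 'cV[R]_c) : dot x (- z) = - dot x z.
Proof. by rewrite -scaleN1r dotZr mulN1r. Qed.

Lemma enorm_dot (c : nat) (x : 'cV[R]_c) : enorm x ^+ 2 = dot x x.
Proof. by rewrite enorm_sq /dot; apply: eq_bigr => i _; rewrite expr2. Qed.

Lemma cs_unit (c : nat) (x z : 'cV[R]_c) : enorm x = 1 -> dot x z <= enorm z.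
Proof.
move=> x1.
have [z0|zn0] := eqVneq (enorm z) 0.
  by rewrite z0 /dot big1 ?lexx // => i _; rewrite (enorm_eq0 z0) mxE mulr0.
set r := enorm z.
have r0 : 0 < r by rewrite lt_def zn0 enorm_ge0.
have H : forall i, 2 * r * (x i 0 * z i 0) <= r ^+ 2 * x i 0 ^+ 2 + z i 0 ^+ 2.
  move=> i; rewrite -subr_ge0.
  have -> : r ^+ 2 * x i 0 ^+ 2 + z i 0 ^+ 2 - 2 * r * (x i 0 * z i 0)
    = (r * x i 0 - z i 0) ^+ 2 by ring.
  exact: sqr_ge0.
have Hs : 2 * r * dot x z <= r ^+ 2 * (\sum_i x i 0 ^+ 2) + \sum_i z i 0 ^+ 2.
  rewrite /dot !mulr_sumr -big_split /=.
  by apply: ler_sum => i _; apply: H.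
rewrite -!enorm_sq x1 -/r expr1n mulr1 in Hs.
have : 2 * r * dot x z <= 2 * r * r by rewrite (_ : 2 * r * r = r ^+ 2 + r ^+ 2) //; ring.
by rewrite ler_pM2l // mulr_gt0.
Qed.

Lemma abs_dot_unit (c : nat) (x z : 'cV[R]_c) : enorm x = 1 -> `|dot x z| <= enorm z.
Proof.
move=> x1; rewrite ler_norml cs_unit // andbT lerNl -dotNr -(enormN z).
exact: cs_unit.
Qed.

Lemma dot_tr (c : nat) (M : 'M[R]_c) (x : 'cV[R]_c) :
  dot (M *m x) (M *m x) = dot x (M^T *m (M *m x)).
Proof. by rewrite !dotE trmx_mul !mulmxA. Qed.


Definition Sset (p q : nat) (M : 'M[R]_(p, q)) :=
  [set enorm (M *m x) | x in [set x : 'cV[R]_q | enorm x = 1]].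

Lemma Sset_ub (p q : nat) (M : 'M[R]_(p, q)) :
  exists K, 0 <= K /\ forall x, enorm x = 1 -> enorm (M *m x) <= K.
Proof.
set C := \sum_i \sum_j `|M i j|.
exists (Num.sqrt (p%:R * C ^+ 2)); split; first exact: sqrtr_ge0.
move=> x x1; apply: ler_wsqrtr.
have Hp : forall i, (M *m x) i 0 ^+ 2 <= C ^+ 2.
  move=> i; rewrite -real_normK ?num_real //; apply: lerXn2r; rewrite ?nnegrE //.
    by rewrite /C sumr_ge0 // => k _; rewrite sumr_ge0.
  rewrite mxE; apply: (le_trans (ler_norm_sum _ _ _)).
  apply: (@le_trans _ _ (\sum_j `|M i j|)).
    apply: ler_sum => j _; rewrite normrM -{2}(mulr1 `|M i j|).
    by apply: ler_wpM2l => //; rewrite -x1 entry_le.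
  rewrite /C (bigD1 i) //= lerDl sumr_ge0 // => k _; exact: sumr_ge0.
apply: (@le_trans _ _ (\sum_(i < p) C ^+ 2)); first exact: ler_sum.
by rewrite sumr_const card_ord mulr_natl.
Qed.

Lemma Sset_has_ub (p q : nat) (M : 'M[R]_(p, q)) : has_ubound (Sset M).
Proof.
have [K [_ HK]] := Sset_ub M; exists K => v [x x1 <-]; exact: HK.
Qed.

Lemma specnorm_ge0 (p q : nat) (M : 'M[R]_(p, q)) : 0 <= specnorm M.
Proof.
rewrite /specnorm; rewrite -/(Sset M); have [E0|/set0P [v Ev]] := eqVneq (Sset M) set0.
  by rewrite E0 sup0.
apply: (le_trans _ (ub_le_sup (Sset_has_ub M) Ev)).
by case: Ev => x _ <-; exact: enorm_ge0.
Qed.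

Lemma specnorm_ub (p q : nat) (M : 'M[R]_(p, q)) x :
  enorm x = 1 -> enorm (M *m x) <= specnorm M.
Proof. move=> x1; apply: (ub_le_sup (Sset_has_ub M)); by exists x. Qed.

Lemma specnorm_le (p q : nat) (M : 'M[R]_(p, q)) b : 0 <= b ->
  (forall x, enorm x = 1 -> enorm (M *m x) <= b) -> specnorm M <= b.
Proof.
move=> b0 H; rewrite /specnorm; rewrite -/(Sset M); have [E0|/set0P [v Ev]] := eqVneq (Sset M) set0.
  by rewrite E0 sup0.
apply: ge_sup; first by exists v.
by move=> w [x x1 <-]; exact: H.
Qed.

Lemma op_bound (p q : nat) (M : 'M[R]_(p, q)) y :
  enorm (M *m y) <= specnorm M * enorm y.
Proof.
have [y0|yn0] := eqVneq (enorm y) 0.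
  by rewrite y0 mulr0 (enorm_eq0 y0) mulmx0 enorm0.
have yp : 0 < enorm y by rewrite lt_def yn0 enorm_ge0.
have u1 : enorm ((enorm y)^-1 *: y) = 1.
  by rewrite enormZ ger0_norm ?invr_ge0 ?enorm_ge0 // mulVf.
have := specnorm_ub M u1; rewrite -scalemxAr enormZ ger0_norm ?invr_ge0 ?enorm_ge0 //.
by rewrite ler_pdivrMl // mulrC.
Qed.

Lemma scale_tr (c : nat) (a : R) (M : 'M[R]_c) :
  `|a| * specnorm M <= specnorm (a *: M^T).
Proof.
have [->|a0] := eqVneq a 0; first by rewrite normr0 mul0r specnorm_ge0.
have ap : 0 < `|a| by rewrite normr_gt0.
rewrite mulrC -ler_pdivlMr //.
apply: specnorm_le; first by rewrite divr_ge0 // specnorm_ge0.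
move=> x x1; set y := M *m x.
have [y0|yn0] := eqVneq (enorm y) 0; first by rewrite y0 divr_ge0 // specnorm_ge0.
have yp : 0 < enorm y by rewrite lt_def yn0 enorm_ge0.
have H : enorm y * enorm y <= specnorm (a *: M^T) / `|a| * enorm y.
  rewrite -expr2 enorm_dot dot_tr -/y.
  have -> : M^T *m y = a^-1 *: ((a *: M^T) *m y).
    by rewrite -scalemxAl scalerA mulVf // scale1r.
  rewrite dotZr; apply: (le_trans (ler_norm _)); rewrite normrM normfV.
  rewrite mulrAC [X in _ <= X]mulrC ler_pM2l ?invr_gt0 //.
  apply: (le_trans (abs_dot_unit _ x1)); exact: op_bound.
by rewrite ler_pM2r in H.
Qed.


Lemma normC_cmod (z : complex.complex (R : rcfType)) : `|z| = (cmod z)%:C%C.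
Proof. by rewrite normc_def. Qed.

Lemma normC_real (x : R) : `|(x%:C)%C : complex.complex (R : rcfType)| = (`|x|)%:C%C.
Proof. by rewrite normc_def /= expr0n /= addr0 sqrtr_sqr. Qed.

Lemma cmod_ge0 (z : complex.complex (R : rcfType)) : 0 <= cmod z.
Proof. exact: sqrtr_ge0. Qed.

Lemma eig_bound (n : nat) (A : 'M[R]_n) (l : complex.complex (R : rcfType)) k (m : R) :
  eigenvalue (map_mx (fun x : R => complex.real_complex (R : rcfType) x) A) l ->
  (forall i j, `|mxpow A k i j| <= m) -> cmod l ^+ k <= n%:R * m.
Proof.
have -> : map_mx (fun x : R => complex.real_complex (R : rcfType) x) A =
          map_mx (complex.real_complex (R : rcfType)) A by [].
move=> /eigenvalueP [v Hv vn0] Hm.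
set f := complex.real_complex (R : rcfType).
have Hk : v *m map_mx f (mxpow A k) = l ^+ k *: v.
  elim: k {Hm} => [|k IH]; first by rewrite /mxpow /= map_mx1 mulmx1 expr0 scale1r.
  rewrite mxpowS map_mxM mulmxA IH -scalemxAl Hv scalerA -exprSr //.
have [j0 Hj0] : exists j, v 0 j != 0.
  apply/existsP; apply: contraR vn0 => /existsPn H; apply/eqP/rowP => j.
  by rewrite mxE; apply/eqP; move: (H j); rewrite negbK.
have [jm _ Hjm] := eq_bigmax j0 predT (fun j => cmod (v 0 j)) isT (fun j _ => cmod_ge0 (v 0 j)).
have Hle : forall j, cmod (v 0 j) <= cmod (v 0 jm).
  by move=> j; rewrite -Hjm; apply: le_bigmax.
have vjm : 0 < cmod (v 0 jm).
  apply: (lt_le_trans _ (Hle j0)); rewrite lt_def cmod_ge0 andbT.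
  apply: contra Hj0 => /eqP H; rewrite -normr_eq0 normC_cmod H.
  done.
have E : l ^+ k * v 0 jm = \sum_i v 0 i * (mxpow A k i jm)%:C%C.
  have := congr1 (fun M : 'rV[_]_n => M 0 jm) Hk; rewrite !mxE => <-.
  by apply: eq_bigr => i _; rewrite mxE.
have H1 : `|l| ^+ k * `|v 0 jm| <= n%:R * m%:C%C * `|v 0 jm|.
  rewrite -normrX -normrM E; apply: (le_trans (ler_norm_sum _ _ _)).
  apply: (@le_trans _ _ (\sum_(i < n) m%:C%C * `|v 0 jm|)).
    apply: ler_sum => i _; rewrite normrM mulrC; apply: ler_pM => //.
      by rewrite normC_real lecR.
    by rewrite !normC_cmod lecR.
  by rewrite sumr_const card_ord -mulrA mulr_natl.
rewrite ler_pM2r in H1; last by rewrite normC_cmod ltcR.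
have E2 : (n%:R * m%:C)%C = ((n%:R * m)%:C)%C :> complex.complex (R : rcfType) by rewrite rmorphM rmorph_nat.
by rewrite E2 normC_cmod -rmorphXn lecR in H1.
Qed.


Lemma sym_bound (n : nat) (e : rel 'I_n) k (m : R) : (0 < n)%N ->
  (forall i j, `|mxpow (sym_norm_adj R e) k i j| <= m) -> 1 <= n%:R * m.
Proof.
move=> n0 Hm.
set AI := adjmx R e + 1%:M.
set d := fun i => \sum_j AI i j.
set w := fun i => Num.sqrt (d i).
have AI0 : forall i j, 0 <= AI i j.
  by move=> i j; rewrite !mxE addr_ge0 ?ler0n.
have d1 : forall i, 1 <= d i.
  move=> i; rewrite /d (bigD1 i) //= -[1]addr0; apply: lerD.
    by rewrite !mxE eqxx /= lerDr ler0n.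
  by rewrite sumr_ge0.
have wp : forall i, 0 < w i by move=> i; rewrite sqrtr_gt0; apply: (lt_le_trans ltr01).
have Aij : forall i j, sym_norm_adj R e i j = (w i)^-1 * AI i j * (w j)^-1.
  by move=> i j; rewrite /sym_norm_adj mul_mx_diag mul_diag_mx !mxE.
set wv : 'cV[R]_n := \col_i w i.
have Aw : sym_norm_adj R e *m wv = wv.
  apply/matrixP => i z; rewrite (ord1 z) !mxE.
  rewrite (eq_bigr (fun j => (w i)^-1 * AI i j)); last first.
    by move=> j _; rewrite Aij [wv j 0]mxE divfK // gt_eqF.
  rewrite -mulr_sumr -/(d i) -[d i](@sqr_sqrtr _ (d i)); last exact: (le_trans ler01).
  by rewrite -/(w i) expr2 mulKf // gt_eqF.
have Akw : mxpow (sym_norm_adj R e) k *m wv = wv.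
  elim: k {Hm} => [|k IH]; first by rewrite mxpow0 mul1mx.
  by rewrite mxpowS -mulmxA Aw IH.
pose i0 := Ordinal n0.
have [im _ Him] := eq_bigmax i0 predT w isT (fun j _ => ltW (wp j)).
have Hle : forall j, w j <= w im by move=> j; rewrite -Him; apply: le_bigmax.
have E : w im = \sum_j mxpow (sym_norm_adj R e) k im j * w j.
  have := congr1 (fun M : 'cV[R]_n => M im 0) Akw; rewrite !mxE => <-.
  by apply: eq_bigr => j _; rewrite mxE.
have H1 : 1 * w im <= n%:R * m * w im.
  rewrite mul1r {1}E; apply: (le_trans (ler_norm _)); apply: (le_trans (ler_norm_sum _ _ _)).
  apply: (@le_trans _ _ (\sum_(j < n) m * w im)).
    apply: ler_sum => j _; rewrite normrM (ger0_norm (ltW (wp j))).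
    by apply: ler_pM => //; exact: ltW.
  by rewrite sumr_const card_ord -mulrA mulr_natl.
by rewrite ler_pM2r in H1.
Qed.

Lemma root_bound (k : nat) (K : R) : (0 < k)%N -> 0 <= K ->
  exists b, 0 <= b /\ b ^+ k = K.
Proof.
move=> k0 K0; exists (K `^ (k%:R^-1)); split; first exact: powR_ge0.
rewrite -powR_mulrn ?powR_ge0 // -powRrM mulVf ?powRr1 //.
by rewrite pnatr_eq0 -lt0n.
Qed.

Lemma specrad_bound (n : nat) (A : 'M[R]_n) k (m : R) : (0 < k)%N -> 0 <= m ->
  (forall i j, `|mxpow A k i j| <= m) -> specrad A ^+ k <= n%:R * m.
Proof.
move=> k0 m0 Hm.
have [b [b0 bk]] := root_bound k0 (mulr_ge0 (ler0n _ n) m0).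
set E := [set cmod l | l in [set l : complex.complex (R : rcfType) |
         eigenvalue (map_mx (fun x : R => complex.real_complex (R : rcfType) x) A) l]].
have Eb : forall x, E x -> 0 <= x /\ x <= b.
  move=> x [l Hl <-]; split; first exact: cmod_ge0.
  rewrite -(ler_pXn2r k0) ?nnegrE ?cmod_ge0 // bk.
  exact: eig_bound Hl Hm.
have [sr0 srb] : 0 <= specrad A /\ specrad A <= b.
  rewrite /specrad -/E; have [E0|/set0P [v Ev]] := eqVneq E set0.
    by rewrite E0 sup0 lexx.
  have hub : has_ubound E by exists b => x /Eb [].
  split; first exact: le_trans (proj1 (Eb _ Ev)) (ub_le_sup hub Ev).
  by apply: ge_sup; [exists v | move=> x /Eb []].
by rewrite -bk; apply: lerXn2r; rewrite ?nnegrE.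
Qed.

Lemma final_bound (n c c' : nat) (A : 'M[R]_n) (W : 'M[R]_c) (B : 'M[R]_(c', c))
  (U : nat -> 'M[R]_(n, c')) s t Xs r :
  (exists i j, r <= `|mxpow A (t - s) i j|) ->
  r * specnorm (mxpow W (t - s)) <= sensitivity A W B U s t Xs.
Proof.
move=> [i [j H]].
apply: (le_trans (ler_wpM2r (specnorm_ge0 _) H)).
apply: (le_trans (scale_tr _ _)); rewrite -(row_jacobianE A W B U s t Xs).
exact: (le_bigmax 0 (fun ij : 'I_n * 'I_n => specnorm (row_jacobian A W B U s t Xs ij.1 ij.2)) (i, j)).
Qed.

Lemma max_entry (n : nat) (P : 'M[R]_n) : (0 < n)%N ->
  exists i j, forall i' j', `|P i' j'| <= `|P i j|.
Proof.
move=> n0; pose i0 := Ordinal n0.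
have [[i j] _ H] := eq_bigmax (i0, i0) predT (fun ij : 'I_n * 'I_n => `|P ij.1 ij.2|)
   isT (fun _ _ => normr_ge0 _).
exists i, j => i' j'; rewrite /= -H.
exact: (le_bigmax 0 (fun ij : 'I_n * 'I_n => `|P ij.1 ij.2|) (i', j')).
Qed.
End S.

Unset Implicit Arguments.
Set Strict Implicit.

Theorem theorem3p11 (R : realType) (n c c' : nat) (e : rel 'I_n)
  (hn : (0 < n)%N) (hconn : graph_connected e)
  (W : 'M[R]_c) (B : 'M[R]_(c', c)) (U : nat -> 'M[R]_(n, c')) :
  (forall A : 'M[R]_n, is_GSO e A ->
     forall (s t : nat) (Xs : 'M[R]_(n, c)), (s <= t)%N ->
       specrad A ^+ (t - s) / n%:R * specnorm (mxpow W (t - s))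
         <= sensitivity A W B U s t Xs)
  /\
  (undirected e ->
     forall (s t : nat) (Xs : 'M[R]_(n, c)), (s <= t)%N ->
       1 / n%:R * specnorm (mxpow W (t - s))
         <= sensitivity (sym_norm_adj R e) W B U s t Xs).
Proof.
have npos : 0 < n%:R :> R by rewrite ltr0n.
split.
  move=> A _ s t Xs _; apply: final_bound.
  have [i [j Hij]] := max_entry (mxpow A (t - s)) hn.
  exists i, j; rewrite ler_pdivrMr // mulrC.
  case k0 : (t - s)%N => [|k].
    rewrite expr0; move: (Hij i i); rewrite k0 mxpow0 mxE eqxx /= normr1 => H1.
    have n1 : 1 <= n%:R :> R by rewrite ler1n.
    nra.
  rewrite -k0; apply: specrad_bound => //; first by rewrite k0.
move=> _ s t Xs _; apply: final_bound.
have [i [j Hij]] := max_entry (mxpow (sym_norm_adj R e) (t - s)) hn.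
exists i, j; rewrite ler_pdivrMr // mulrC.
exact: sym_bound hn Hij.
Qed.
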